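(* Let $n\ge1$, $m\ge0$ and let $v,u$ be vertices of $Y_{n,m}$. Then $v-u$ is a vertex of $Z_{n,m}$ and $d_{Y_{n,m}}(v,u)=d_{Z_{n,m}}(v-u,0)$.
   Context: The Yoke graph $Y_{n,m}$ has vertices the tuples $v=(v_0,\dots,v_{m+1})$ with $v_0,v_{m+1}\in\mathbb{Z}_n$, $v_1,\dots,v_m\in\{0,1\}$, $\sum v_i\equiv0\pmod n$; the dYoke graph $Z_{n,m}$ is defined identically but with $v_1,\dots,v_m\in\{-1,0,1\}$. In both, $u\sim v$ iff there is $0\le i\le m$ with $u_j=v_j$ for $j\notin\{i,i+1\}$ and either ($u_i=v_i+1$, $u_{i+1}=v_{i+1}-1$) or ($u_i=v_i-1$, $u_{i+1}=v_{i+1}+1$), bucket entries computed mod $n$. The difference $v-u$ is taken entrywise (buckets mod $n$), and $0$ is the all-zero vertex. *)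

(* Defs.v *)
From mathcomp Require Import all_boot all_order all_algebra.
Set Implicit Arguments. Unset Strict Implicit. Unset Printing Implicit Defensive.
Import GRing.Theory Num.Theory.
Local Open Scope ring_scope.

(* A vertex is a sequence v = [:: v_0; ...; v_(m+1)] of integers.
   Positions 0 and m+1 are the buckets; they hold an element of Z_n,
   represented by its canonical residue in [0, n). *)
Definition is_bucket (m j : nat) : bool := (j == 0)%N || (j == m.+1)%N.

Definition yoke_vertex (n m : nat) (mid : pred int) (v : seq int) : bool :=
  [&& size v == m.+2,
      [forall j : 'I_m.+2,
         if is_bucket m j then (0 <= v`_j) && (v`_j < n%:Z) else mid v`_j]
    & ((\sum_(j < m.+2) v`_j) == 0 %[mod n%:Z])%Z].

Definition Y_mid : pred int := fun x => (x == 0) || (x == 1).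
Definition Z_mid : pred int := fun x => [|| x == -1, x == 0 | x == 1].

Definition Yvert (n m : nat) : pred (seq int) := yoke_vertex n m Y_mid.
Definition Zvert (n m : nat) : pred (seq int) := yoke_vertex n m Z_mid.

Definition entry_eq (n m j : nat) (a b : int) : bool :=
  if is_bucket m j then (a == b %[mod n%:Z])%Z else a == b.

Definition yoke_adj (n m : nat) (u v : seq int) : bool :=
  [exists i : 'I_m.+1,
     [forall j : 'I_m.+2,
        ((j : nat) != i) && ((j : nat) != i.+1) ==> entry_eq n m j u`_j v`_j]
     && ((entry_eq n m i u`_i (v`_i + 1) && entry_eq n m i.+1 u`_i.+1 (v`_i.+1 - 1))
      || (entry_eq n m i u`_i (v`_i - 1) && entry_eq n m i.+1 u`_i.+1 (v`_i.+1 + 1)))].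

Fixpoint walk (V : pred (seq int)) (E : rel (seq int)) (k : nat)
    (x y : seq int) : Prop :=
  match k with
  | 0 => x = y /\ V x
  | k'.+1 => exists z, [/\ V x, E x z & walk V E k' z y]
  end.

(* graph distance: [is_dist V E x y k] iff d(x,y) = k (a shortest walk has
   length k); d(x,y) = infinity iff no k satisfies it. *)
Definition is_dist (V : pred (seq int)) (E : rel (seq int)) (x y : seq int)
    (k : nat) : Prop :=
  walk V E k x y /\ forall j, walk V E j x y -> (k <= j)%N.

Definition vdiff (n m : nat) (v u : seq int) : seq int :=
  [seq (if is_bucket m j then ((v`_j - u`_j) %% n%:Z)%Z else v`_j - u`_j)
  | j <- iota 0 m.+2].

Definition zero_vertex (m : nat) : seq int := nseq m.+2 0.

(* Main.v *)
Require Import Defs.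
From mathcomp Require Import all_boot all_order all_algebra zify.
Set Implicit Arguments. Unset Strict Implicit. Unset Printing Implicit Defensive.
Import GRing.Theory Num.Theory.
Local Open Scope ring_scope.

Lemma modeqP (n : nat) (a b : int) :
  reflect (exists q : int, a - b = q * n%:Z) ((a == b %[mod n%:Z])%Z).
Proof. rewrite eqz_mod_dvd; exact: dvdzP. Qed.

Lemma small_eq (a b q : int) (n : nat) : (1 <= n)%N -> 0 <= a -> a < n%:Z ->
  0 <= b -> b < n%:Z -> a - b = q * n%:Z -> a = b.
Proof. move=> hn *. have : q = 0 \/ 1 <= q \/ q <= -1 by lia.
case=> [hq|[hq|hq]]. lia. have : n%:Z <= q * n%:Z. nia. lia.
have : q * n%:Z <= - n%:Z. nia. lia. Qed.

Lemma modEE (a : int) (n : nat) : exists q : int, (a %% n%:Z)%Z - a = q * n%:Z.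
Proof. exists (- (a %/ n%:Z)%Z). rewrite {2}(divz_eq a n%:Z). lia. Qed.

Lemma mod_range (a : int) (n : nat) : (1 <= n)%N ->
  0 <= (a %% n%:Z)%Z /\ (a %% n%:Z)%Z < n%:Z.
Proof. move=> hn; split; [apply: modz_ge0 | apply: ltz_pmod]; lia. Qed.

Definition EE (n m j : nat) (a b : int) :=
  exists q : int, a - b = q * n%:Z /\ (~~ is_bucket m j -> q = 0).

Lemma entryP n m j a b : entry_eq n m j a b <-> EE n m j a b.
Proof.
rewrite /entry_eq /EE; case: ifP => hb.
  split; first by move/modeqP => [q hq]; exists q; split.
  by move=> [q [hq _]]; apply/modeqP; exists q.
split; first by move/eqP => ->; exists 0; split; [lia|].
by move=> [q [hq /(_ isT) h0]]; apply/eqP; move: hq; rewrite h0; lia.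
Qed.

Definition dlt (l i : nat) : int := (l == i)%:Z - (l == i.+1)%:Z.

Lemma adj_char n m x z : yoke_adj n m x z <->
  exists i s, [/\ (i < m.+1)%N, (s = 1 \/ s = -1) &
     forall l, (l < m.+2)%N -> EE n m l x`_l (z`_l + s * dlt l i)].
Proof.
split.
  case/existsP => i /andP [/forallP H1 H2].
  have hi1 : (i.+1 == i :> nat) = false by apply: gtn_eqF.
  have hi2 : (i == i.+1 :> nat) = false by apply: ltn_eqF.
  case/orP: H2 => /andP [/entryP Ha /entryP Hb].
  - exists (i : nat), 1; split; [by []|by left|] => l hl.
    case: (eqVneq l i) => [->|ne1]; first by rewrite /dlt eqxx hi2 /=;
      move: Ha => [q [h1 h2]]; exists q; split => //; lia.
    case: (eqVneq l i.+1) => [->|ne2]; first by rewrite /dlt eqxx hi1 /=;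
      move: Hb => [q [h1 h2]]; exists q; split => //; lia.
    rewrite /dlt (negbTE ne1) (negbTE ne2) /=.
    have := H1 (Ordinal hl); rewrite /= ne1 ne2 /= => /entryP [q [h1 h2]].
    exists q; split => //; lia.
  - exists (i : nat), (-1); split; [by []|by right|] => l hl.
    case: (eqVneq l i) => [->|ne1]; first by rewrite /dlt eqxx hi2 /=;
      move: Ha => [q [h1 h2]]; exists q; split => //; lia.
    case: (eqVneq l i.+1) => [->|ne2]; first by rewrite /dlt eqxx hi1 /=;
      move: Hb => [q [h1 h2]]; exists q; split => //; lia.
    rewrite /dlt (negbTE ne1) (negbTE ne2) /=.
    have := H1 (Ordinal hl); rewrite /= ne1 ne2 /= => /entryP [q [h1 h2]].
    exists q; split => //; lia.
move=> [i [s [hi hs H]]].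
apply/existsP; exists (Ordinal hi); apply/andP; split.
  apply/forallP => l; apply/implyP => /andP [ne1 ne2] /=.
  apply/entryP; have := H l (ltn_ord l).
  rewrite /dlt (negbTE ne1) (negbTE ne2) /= => [[q [h1 h2]]].
  exists q; split => //; lia.
have hi1 : (i.+1 == i :> nat) = false by apply: gtn_eqF.
have hi2 : (i == i.+1 :> nat) = false by apply: ltn_eqF.
have := H i (leqW hi); have := H i.+1 hi.
rewrite /dlt /= eqxx hi1 hi2 /= => [[q1 [h1 h1']]] [q2 [h2 h2']].
apply/orP; case: hs => hs; subst s; [left|right]; apply/andP; split; apply/entryP.
- by exists q2; split => //; lia.
- by exists q1; split => //; lia.
- by exists q2; split => //; lia.
- by exists q1; split => //; lia.
Qed.

Fixpoint F (b : int) (d : nat -> int) (j : nat) : int :=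
  if j is j'.+1 then F b d j' + d j else b.
Definition Pot (m : nat) b d := \sum_(j < m.+1) `|F b d j|.
Definition dd (x y : seq int) (l : nat) := x`_l - y`_l.

Lemma F_shift m b1 b2 d1 d2 i (s : int) :
  (forall l, (1 <= l <= m)%N -> d1 l = d2 l + s * dlt l i) ->
  b1 = b2 + s * (i == 0%N)%:Z ->
  forall j, (j <= m)%N -> F b1 d1 j = F b2 d2 j + s * (j == i)%:Z.
Proof.
move=> hd hb; elim=> [|j IH] hj /=; first by rewrite hb eq_sym.
rewrite IH ?(ltnW hj) // hd ?hj // /dlt eqSS.
by case: (j == i); case: (j.+1 == i) => /=; lia.
Qed.

Lemma Pot_diff m b1 b2 d1 d2 i : (i <= m)%N ->
  (forall j, (j <= m)%N -> j != i -> F b1 d1 j = F b2 d2 j) ->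
  Pot m b1 d1 = Pot m b2 d2 + (`|F b1 d1 i| - `|F b2 d2 i|).
Proof.
move=> hi H; rewrite /Pot (bigD1 (Ordinal (hi : (i < m.+1)%N))) //=.
rewrite [X in _ = X + _](bigD1 (Ordinal (hi : (i < m.+1)%N))) //=.
rewrite (eq_bigr (fun j : 'I_m.+1 => `|F b2 d2 j|)); first by rewrite [RHS]addrC addrA subrK.
move=> j hj; apply: congr1; apply: H; first exact: ltn_ord j.
by apply: contra hj => /eqP hj; apply/eqP; apply: val_inj.
Qed.

Lemma Pot_ge m b d i : (i <= m)%N -> `|F b d i| <= Pot m b d.
Proof.
move=> hi; rewrite /Pot (bigD1 (Ordinal (hi : (i < m.+1)%N))) //=.
by rewrite lerDl; apply: sumr_ge0 => j _; apply: normr_ge0.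
Qed.

Lemma Pot_ext m b1 b2 d1 d2 : (forall j, (j <= m)%N -> F b1 d1 j = F b2 d2 j) ->
  Pot m b1 d1 = Pot m b2 d2.
Proof. by move=> H; apply: eq_bigr => j _; rewrite H //; exact: ltn_ord j. Qed.

Lemma F_neg b (x y : seq int) j : F (- b) (dd y x) j = - F b (dd x y) j.
Proof. by elim: j => [|j IH] //=; rewrite IH /dd; lia. Qed.

Lemma Pot_neg m b (x y : seq int) : Pot m (- b) (dd y x) = Pot m b (dd x y).
Proof. by apply: eq_bigr => j _; rewrite F_neg normrN. Qed.

Lemma F_zero b d j : b = 0 -> (forall l, d l = 0) -> F b d j = 0.
Proof. by move=> hb hd; elim: j => [|j IH] //=; rewrite IH hd addr0. Qed.

Lemma EE_mid n m l a b : (0 < l)%N -> (l <= m)%N -> EE n m l a b -> a = b.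
Proof.
move=> l1 l2 [q [h1 h2]]; have hq : q = 0.
  by apply: h2; rewrite /is_bucket; apply/negP => /orP [] /eqP; lia.
by move: h1; rewrite hq mul0r => /eqP; rewrite subr_eq0 => /eqP.
Qed.

Definition good n m (x y : seq int) (k : nat) :=
  exists b : int, (exists q : int, b - (x`_0%N - y`_0%N) = q * n%:Z) /\
                  Pot m b (dd x y) <= k%:Z.

Lemma good_swap n m x y k : good n m x y k -> good n m y x k.
Proof.
move=> [b [[q hq] hp]]; exists (- b); split; last by rewrite Pot_neg.
by exists (- q); lia.
Qed.

Lemma walk_good n m (V : pred (seq int)) k x y :
  walk V (yoke_adj n m) k x y -> good n m x y k.
Proof.
elim: k x => [|k IH] x /=.
  move=> [-> _]; exists 0; split; first by exists 0; lia.
  rewrite /Pot big1 // => j _; rewrite F_zero //; last by move=> l; rewrite /dd subrr.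
move=> [z [_ /adj_char [i [s [hi hs H]]] /IH [b [[q hq] hp]]]].
exists (b + s * (i == 0%N)%:Z); split.
  have := H 0%N isT; rewrite /dlt /= eq_sym => [[q0 [h0 _]]].
  exists (q - q0); rewrite mulrBl; set X := x`_0%N in h0 *; set Y := y`_0%N in hq *.
  by set Z := z`_0%N in hq h0 *; case: hs => hs; subst s; lia.
rewrite (@Pot_diff m _ b _ (dd z y) i) //.
- rewrite (@F_shift m (b + s * (i == 0%N)%:Z) b (dd x y) (dd z y) i s) //.
  + rewrite eqxx; case: hs => hs; subst s; lia.
  + move=> l /andP [l1 l2]; have := H l; rewrite ltnS ltnW // => /(_ isT).
    by rewrite /dd; move/(EE_mid l1 l2) => ->; rewrite addrAC.
- move=> j hj ne; rewrite (@F_shift m (b + s * (i == 0%N)%:Z) b (dd x y) (dd z y) i s) //.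
  + by rewrite (negbTE ne) mulr0 addr0.
  + move=> l /andP [l1 l2]; have := H l; rewrite ltnS ltnW // => /(_ isT).
    by rewrite /dd; move/(EE_mid l1 l2) => ->; rewrite addrAC.
Qed.

Lemma nthmi (g : nat -> int) k j : (j < k)%N -> [seq g i | i <- iota 0 k]`_j = g j.
Proof. by move=> hj; rewrite (nth_map 0%N) ?size_iota // nth_iota. Qed.

Lemma vertP n m mid w : yoke_vertex n m mid w ->
  [/\ size w = m.+2,
      forall j, (j < m.+2)%N -> if is_bucket m j then (0 <= w`_j) && (w`_j < n%:Z) else mid w`_j
    & exists q : int, \sum_(j < m.+2) w`_j = q * n%:Z].
Proof.
case/and3P => /eqP hs /forallP H /modeqP [q hq]; split => //.
  by move=> j hj; exact: (H (Ordinal hj)).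
by exists q; rewrite -hq subr0.
Qed.

Lemma mkvert n m mid w : size w = m.+2 ->
  (forall j, (j < m.+2)%N -> if is_bucket m j then (0 <= w`_j) && (w`_j < n%:Z) else mid w`_j) ->
  (exists q : int, \sum_(j < m.+2) w`_j = q * n%:Z) -> yoke_vertex n m mid w.
Proof.
move=> hs H [q hq]; apply/and3P; split; first by rewrite hs.
  by apply/forallP => j; exact: H.
by apply/modeqP; exists q; rewrite subr0.
Qed.

Lemma Y_midE (x : int) : Y_mid x = (0 <= x <= 1).
Proof. rewrite /Y_mid; apply/idP/idP; [case/orP => /eqP ->|] => //; lia. Qed.

Lemma Z_midE (x : int) : Z_mid x = (-1 <= x <= 1).
Proof. rewrite /Z_mid; apply/idP/idP; [case/or3P => /eqP ->|] => //; lia. Qed.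

Lemma sum_cong (n k : nat) (a b : nat -> int) :
  (forall j, (j < k)%N -> exists q : int, a j - b j = q * n%:Z) ->
  exists q : int, \sum_(j < k) a j - \sum_(j < k) b j = q * n%:Z.
Proof.
elim: k => [|k IH] H; first by exists 0; rewrite !big_ord0; lia.
case: IH => [j hj|q hq]; first by apply: H; apply: leqW.
case: (H k (ltnSn k)) => q' hq'.
exists (q + q'); rewrite !big_ord_recr /= mulrDl -hq -hq'.
set A := \sum_(i < k) a i; set B := \sum_(i < k) b i; lia.
Qed.

Lemma vdiff_nth n m v u j : (j < m.+2)%N ->
  (vdiff n m v u)`_j = if is_bucket m j then ((v`_j - u`_j) %% n%:Z)%Z else v`_j - u`_j.
Proof. exact: nthmi. Qed.

Lemma vdiff_EE n m v u j : (j < m.+2)%N ->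
  EE n m j (vdiff n m v u)`_j (v`_j - u`_j).
Proof.
move=> hj; rewrite vdiff_nth //; case: ifP => hb.
  by case: (modEE (v`_j - u`_j) n) => q hq; exists q; split => //; rewrite hb.
by exists 0; split => //; rewrite mul0r subrr.
Qed.

Lemma bucket_mid m j : (j < m.+2)%N -> ~~ is_bucket m j -> (0 < j)%N /\ (j <= m)%N.
Proof. by rewrite /is_bucket => hj /norP [h1 h2]; lia. Qed.

Lemma Zvert_vdiff n m v u : (1 <= n)%N -> Yvert n m v -> Yvert n m u ->
  Zvert n m (vdiff n m v u).
Proof.
move=> hn /vertP [sv Hv [qv hqv]] /vertP [su Hu [qu hqu]].
apply: mkvert; first by rewrite size_map size_iota.
  move=> j hj; rewrite vdiff_nth //; case hb: (is_bucket m j).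
    by case: (mod_range (v`_j - u`_j) hn) => h1 h2; apply/andP; split; [exact: h1|exact: h2].
  have := Hv j hj; have := Hu j hj; rewrite hb !Y_midE Z_midE; lia.
have [q hq] := @sum_cong n m.+2 (fun j => (vdiff n m v u)`_j) (fun j => v`_j - u`_j)
  (fun j hj => let: ex_intro q (conj h _) := @vdiff_EE n m v u j hj in ex_intro _ q h).
exists (q + qv - qu); move: hq; rewrite sumrB hqv hqu.
by move/(congr1 (fun t => t + (qv * n%:Z - qu * n%:Z))); rewrite subrK => ->; lia.
Qed.

Lemma zero_nth m j : (zero_vertex m)`_j = 0.
Proof. by rewrite nth_nseq; case: ifP. Qed.

Lemma vdiff_self n m u : Yvert n m u -> vdiff n m u u = zero_vertex m.
Proof.
move=> /vertP [su _ _]; apply: (@eq_from_nth _ 0).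
  by rewrite size_map size_iota size_nseq.
move=> j; rewrite size_map size_iota => hj.
by rewrite vdiff_nth // zero_nth subrr; case: ifP => // _; rewrite mod0z.
Qed.

Lemma adj_vdiff n m x z u : yoke_adj n m x z ->
  yoke_adj n m (vdiff n m x u) (vdiff n m z u).
Proof.
move=> /adj_char [i [s [hi hs H]]]; apply/adj_char; exists i, s; split => // l hl.
case: (H l hl) => q [h1 h2].
case: (@vdiff_EE n m x u l hl) => q1 [h3 h4].
case: (@vdiff_EE n m z u l hl) => q2 [h5 h6].
exists (q + q1 - q2); split; last by move=> hb; rewrite h2 // h4 // h6 //.
rewrite !mulrDl mulNr -h1 -h3 -h5.
set X := x`_l in h1 h3 *; set Z := z`_l in h1 h5 *.
set A := (vdiff n m x u)`_l in h3 *; set B := (vdiff n m z u)`_l in h5 *.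
lia.
Qed.

Lemma walk_map n m (u : seq int) j x : (1 <= n)%N -> Yvert n m u ->
  walk (Yvert n m) (yoke_adj n m) j x u ->
  walk (Zvert n m) (yoke_adj n m) j (vdiff n m x u) (zero_vertex m).
Proof.
move=> hn hu; elim: j x => [|j IH] x /=.
  move=> [-> _]; split; first exact: vdiff_self.
  exact: Zvert_vdiff.
move=> [z [hx hxz hw]]; exists (vdiff n m z u); split.
- exact: Zvert_vdiff.
- exact: adj_vdiff.
- exact: IH.
Qed.

Lemma F_ext m b d1 d2 : (forall l, (1 <= l <= m)%N -> d1 l = d2 l) ->
  forall j, (j <= m)%N -> F b d1 j = F b d2 j.
Proof.
move=> H j hj; rewrite (@F_shift m b b d1 d2 0%N 0) ?mul0r ?addr0 //.
by move=> l hl; rewrite mul0r addr0 H.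
Qed.

Lemma good_vdiff n m v u k : good n m (vdiff n m v u) (zero_vertex m) k -> good n m v u k.
Proof.
move=> [b [[q hq] hp]]; exists b; split.
  case: (@vdiff_EE n m v u 0%N isT) => q1 [h1 _].
  exists (q + q1); move: hq h1; rewrite zero_nth mulrDl.
  set A := (vdiff n m v u)`_0%N; set X := v`_0%N; set Y := u`_0%N; lia.
rewrite (@Pot_ext m b b _ (dd (vdiff n m v u) (zero_vertex m))) //.
apply: F_ext => l /andP [l1 l2]; rewrite /dd zero_nth subr0 vdiff_nth; last by lia.
by rewrite /is_bucket; case: ifP => // /orP [] /eqP; lia.
Qed.

Lemma midY n m w l : Yvert n m w -> (0 < l)%N -> (l <= m)%N -> 0 <= w`_l <= 1.
Proof.
move=> /vertP [_ H _] l1 l2; have := H l; rewrite ltnS leqW // => /(_ isT).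
by rewrite /is_bucket; case: ifP => [/orP [] /eqP|_]; [lia|lia|rewrite Y_midE].
Qed.

Section Step.
Variables (n m : nat) (v u : seq int) (b : int).
Hypotheses (hv : Yvert n m v) (hu : Yvert n m u).
Local Notation FF := (F b (dd v u)).

Lemma down i : (i <= m)%N -> 0 < FF i ->
  exists a, [/\ (a <= m)%N, 0 < FF a & (a = 0%N \/ v`_a = 1)].
Proof.
elim: i => [|i IH] hi hF; first by exists 0%N; split => //; left.
have := midY hv (ltn0Sn i) hi; have := midY hu (ltn0Sn i) hi => hU hV.
have [h1|h0] : v`_i.+1 = 1 \/ v`_i.+1 = 0 by lia.
  by exists i.+1; split => //; right.
apply: IH; first exact: ltnW.
move: hF => /=; rewrite /dd h0; lia.
Qed.

Lemma up t a : (a + t = m)%N -> 0 < FF a -> (a = 0%N \/ v`_a = 1) ->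
  exists e, [/\ (e <= m)%N, 0 < FF e, (e = 0%N \/ v`_e = 1) & (e.+1 = m.+1 \/ v`_e.+1 = 0)].
Proof.
elim: t a => [|t IH] a ht hF hP.
  by exists a; split => //; [lia|left; lia].
have hl : (a.+1 <= m)%N by lia.
have := midY hv (ltn0Sn a) hl; have := midY hu (ltn0Sn a) hl => hU hV.
have [h1|h0] : v`_a.+1 = 1 \/ v`_a.+1 = 0 by lia.
  apply: (IH a.+1); [lia| |by right]; rewrite /= /dd h1; set X := FF a in hF *; set U := u`_a.+1 in hU *; lia.
by exists a; split => //; [lia|right].
Qed.

End Step.

Definition mv n m (v : seq int) e :=
  [seq (if is_bucket m j then ((v`_j - dlt j e) %% n%:Z)%Z else v`_j - dlt j e) | j <- iota 0 m.+2].

Lemma mv_nth n m v e j : (j < m.+2)%N ->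
  (mv n m v e)`_j = if is_bucket m j then ((v`_j - dlt j e) %% n%:Z)%Z else v`_j - dlt j e.
Proof. exact: nthmi. Qed.

Lemma mv_EE n m v e j : (j < m.+2)%N -> EE n m j (mv n m v e)`_j (v`_j - dlt j e).
Proof.
move=> hj; rewrite mv_nth //; case: ifP => hb.
  by case: (modEE (v`_j - dlt j e) n) => q hq; exists q; split => //; rewrite hb.
by exists 0; split => //; rewrite mul0r subrr.
Qed.

Lemma sum_ind k e : (e < k)%N -> \sum_(j < k) ((j : nat) == e)%:Z = 1 :> int.
Proof.
move=> he; rewrite (bigD1 (Ordinal he)) //= eqxx big1 ?addr0 // => j hj.
suff -> : ((j : nat) == e) = false by [].
by apply/negbTE; apply: contra hj => /eqP hj; apply/eqP; apply: val_inj.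
Qed.

Lemma step n m v u b i : (1 <= n)%N -> Yvert n m v -> Yvert n m u ->
  (exists q : int, b - (v`_0%N - u`_0%N) = q * n%:Z) ->
  (i <= m)%N -> 0 < F b (dd v u) i ->
  exists v', [/\ Yvert n m v', yoke_adj n m v v' &
    exists b', (exists q : int, b' - (v'`_0%N - u`_0%N) = q * n%:Z) /\
               Pot m b' (dd v' u) = Pot m b (dd v u) - 1].
Proof.
move=> hn hv hu [q hq] hi hF.
have [a [ha hFa hPa]] := down hv hu hi hF.
have [e [he hFe hPe hQe]] := @up n m v u b hv hu (m - a) a (subnKC ha) hFa hPa.
have hee1 : (e == e.+1) = false by apply: ltn_eqF.
have hee2 : (e.+1 == e) = false by apply: gtn_eqF.
exists (mv n m v e); split.
- have /vertP [sv Hv [qv hqv]] := hv.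
  apply: mkvert; first by rewrite size_map size_iota.
    move=> j hj; rewrite mv_nth //; case hb: (is_bucket m j).
      by case: (mod_range (v`_j - dlt j e) hn) => h1 h2; apply/andP; split; [exact: h1|exact: h2].
    have [j1 j2] := bucket_mid hj (negbT hb).
    have := midY hv j1 j2; rewrite Y_midE /dlt.
    case: (eqVneq j e) => [hje|n1]; first by subst j; rewrite hee1 /=; case: hPe => [?|->]; lia.
    case: (eqVneq j e.+1) => [hje|n2]; first by subst j; case: hQe => [?|->]; lia.
    by lia.
  have [q1 hq1] := @sum_cong n m.+2 (fun j => (mv n m v e)`_j) (fun j => v`_j - dlt j e)
    (fun j hj => let: ex_intro q (conj h _) := @mv_EE n m v e j hj in ex_intro _ q h).
  exists (q1 + qv); move: hq1; rewrite sumrB hqv.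
  rewrite /dlt sumrB sum_ind ?sum_ind; [|lia|lia].
  by move/(congr1 (fun t => t + (qv * n%:Z - (1 - 1)))); rewrite subrK => ->; lia.
- apply/adj_char; exists e, 1; split; [lia|by left|] => l hl.
  case: (@mv_EE n m v e l hl) => q1 [h1 h2]; exists (- q1); split.
    rewrite mulNr -h1 mul1r; set A := (mv n m v e)`_l; set X := v`_l in h1 *; lia.
  by move=> hb; rewrite h2 // oppr0.
- exists (b - (e == 0%N)%:Z); split.
    case: (@mv_EE n m v e 0%N isT) => q0 [h0 _]; exists (q - q0).
    move: h0 hq; rewrite /dlt /= eq_sym mulrBl.
    set A := (mv n m v e)`_0%N; set X := v`_0%N; set Y := u`_0%N; lia.
  have hFs : forall j, (j <= m)%N ->
      F b (dd v u) j = F (b - (e == 0%N)%:Z) (dd (mv n m v e) u) j + 1 * (j == e)%:Z.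
    apply: F_shift; last by rewrite mul1r subrK.
    move=> l /andP [l1 l2]; rewrite /dd.
    have := @mv_EE n m v e l; rewrite ltnS leqW // => /(_ isT) /(EE_mid l1 l2) ->.
    by rewrite mul1r addrAC subrK.
  rewrite (@Pot_diff m _ b _ (dd v u) e) //.
    have := hFs e he; rewrite eqxx mul1r.
    set X := F b (dd v u) e in hFe *; set Y := F _ _ e; lia.
  by move=> j hj ne; rewrite hFs // (negbTE ne) mulr0 addr0.
Qed.

Lemma eq_of_F0 n m v u b : (1 <= n)%N -> Yvert n m v -> Yvert n m u ->
  (exists q : int, b - (v`_0%N - u`_0%N) = q * n%:Z) ->
  (forall j, (j <= m)%N -> F b (dd v u) j = 0) -> v = u.
Proof.
move=> hn hv hu [q hq] H.
have /vertP [sv Hv [qv hqv]] := hv; have /vertP [su Hu [qu hqu]] := hu.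
have hmid : forall l, (l <= m)%N -> v`_l = u`_l.
  case=> [|l] hl.
    have hb : b = 0 by exact: (H 0%N isT).
    have := Hv 0%N isT; have := Hu 0%N isT; rewrite /is_bucket /= => /andP [h1 h2] /andP [h3 h4].
    apply: (@small_eq _ _ (- q) n) => //; move: hq; rewrite hb mulNr.
    set X := v`_0%N in h3 h4 *; set Y := u`_0%N in h1 h2 *; lia.
  have := H l.+1 hl; rewrite /= H ?(ltnW hl) // add0r /dd => /eqP; rewrite subr_eq0 => /eqP //.
apply: (@eq_from_nth _ 0); first by rewrite sv su.
move=> j; rewrite sv => hj.
have [hjm|hjm] : (j <= m)%N \/ j = m.+1 by lia.
  exact: hmid.
subst j.
have := Hv m.+1 hj; have := Hu m.+1 hj; rewrite /is_bucket eqxx orbT => /andP [h1 h2] /andP [h3 h4].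
apply: (@small_eq _ _ (qv - qu) n) => //.
move: hqv hqu; rewrite (big_ord_recr m.+1) (big_ord_recr m.+1) /=.
rewrite (eq_bigr (fun j : 'I_m.+1 => u`_j)); last by move=> j _; apply: hmid; exact: ltn_ord j.
set S := \sum_(i < m.+1) _; set X := v`_m.+1 in h3 h4 *; set Y := u`_m.+1 in h1 h2 *.
by move=> e1 e2; rewrite mulrBl -e1 -e2 opprD addrACA subrr add0r.
Qed.

Lemma adj_sym n m x z : yoke_adj n m x z -> yoke_adj n m z x.
Proof.
move/adj_char => [i [s [hi hs H]]]; apply/adj_char; exists i, (- s); split => //.
  by case: hs => ->; [right|left]; rewrite ?opprK.
move=> l hl; case: (H l hl) => q [h1 h2]; exists (- q); split.
  move: h1; set X := x`_l; set Z := z`_l; lia.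
by move=> hb; rewrite h2 // oppr0.
Qed.

Lemma walk_app (V : pred (seq int)) (E : rel (seq int)) j x y z :
  walk V E j x y -> E y z -> V z -> walk V E j.+1 x z.
Proof.
elim: j x => [|j IH] x /=.
  by move=> [-> hy] hyz hz; exists z; split.
by move=> [w [hx hxw hw]] hyz hz; exists w; split => //; apply: IH.
Qed.

Lemma walk_from_good n m : (1 <= n)%N -> forall k v u, Yvert n m v -> Yvert n m u ->
  good n m v u k -> exists j, (j <= k)%N /\ walk (Yvert n m) (yoke_adj n m) j v u.
Proof.
move=> hn; elim=> [|k IH] v u hv hu [b [hc hp]];
  case: (boolP [exists i : 'I_m.+1, F b (dd v u) i != 0]) => [/existsP [i hi]|/existsPn H].
- have := @Pot_ge m b (dd v u) i (ltn_ord i).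
  move: hp hi; set P := Pot _ _ _; set X := F _ _ _; lia.
- exists 0%N; split => //=; split => //; apply: (eq_of_F0 hn hv hu hc) => j hj.
  by have := H (Ordinal (hj : (j < m.+1)%N)); rewrite negbK => /eqP.
- have hPi := @Pot_ge m b (dd v u) i (ltn_ord i).
  have [hpos|hneg] : 0 < F b (dd v u) i \/ F b (dd v u) i < 0.
    by move: hi; set X := F _ _ _; lia.
  + have [v' [hv' hvv' [b' [hc' hp']]]] := step hn hv hu hc (ltn_ord i) hpos.
    have [|j [hj hw]] := IH v' u hv' hu.
      by exists b'; split => //; rewrite hp'; move: hp; set P := Pot _ _ _; lia.
    by exists j.+1; split => //; exists v'.
  + have hc2 : exists q : int, - b - (u`_0%N - v`_0%N) = q * n%:Z.
      by case: hc => q hq; exists (- q); rewrite mulNr -hq; set X := v`_0%N; set Y := u`_0%N; lia.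
    have hpos : 0 < F (- b) (dd u v) i by rewrite F_neg; lia.
    have [u' [hu' huu' [b' [hc' hp']]]] := step hn hu hv hc2 (ltn_ord i) hpos.
    have [|j [hj hw]] := IH v u' hv hu'.
      apply: good_swap; exists b'; split => //; rewrite hp' Pot_neg.
      by move: hp; set P := Pot _ _ _; lia.
    exists j.+1; split => //; apply: walk_app hw _ hu.
    exact: adj_sym.
- exists 0%N; split => //=; split => //; apply: (eq_of_F0 hn hv hu hc) => j hj.
  by have := H (Ordinal (hj : (j < m.+1)%N)); rewrite negbK => /eqP.
Qed.

Local Close Scope ring_scope.
Unset Implicit Arguments.

Theorem lemma5p21 (n m : nat) (v u : seq int) :
  (1 <= n)%N -> Yvert n m v -> Yvert n m u ->
  Zvert n m (vdiff n m v u) /\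
  (forall k : nat,
     is_dist (Yvert n m) (yoke_adj n m) v u k <->
     is_dist (Zvert n m) (yoke_adj n m) (vdiff n m v u) (zero_vertex m) k).
Proof.
move=> hn hv hu; split; first exact: Zvert_vdiff.
have WYZ := fun j => @walk_map n m u j v hn hu.
have WZg : forall j, walk (Zvert n m) (yoke_adj n m) j (vdiff n m v u) (zero_vertex m) ->
    good n m v u j by move=> j /walk_good; exact: good_vdiff.
have Gw := fun j => @walk_from_good n m hn j v u hv hu.
move=> k; split.
  move=> [hw hmin]; split; first exact: WYZ.
  move=> j hj; have [j' [hj' hw']] := Gw _ (WZg _ hj).
  exact: leq_trans (hmin _ hw') hj'.
move=> [hw hmin]; have [j' [hj' hw']] := Gw _ (WZg _ hw).
have hk : (k <= j')%N := hmin _ (WYZ _ hw').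
have ejk : j' = k by apply/eqP; rewrite eqn_leq hj' hk.
split; first by rewrite -ejk.
by move=> j hj; exact: hmin _ (WYZ _ hj).
Qed.
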